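(* Let $\mathcal{A}$ be a finite poset, $V$ a vector space and $(\pi_a)_{a\in\mathcal{A}}$ a family of projectors of $V$ satisfying the intersection property. Then $s_as_b=\delta_{a,b}s_a$ for all $a,b\in\mathcal{A}$.
   Context: $(s_a)_{a\in\mathcal{A}}$ is the unique family of endomorphisms of $V$ with $\pi_a=\sum_{b\le a}s_b$ for every $a$ (Möbius inversion). Intersection property: for all $a,b\in\mathcal{A}$, $\pi_a\pi_b=\sum_{c\le a,\ c\le b}s_c$. *)

(* Defs.v *)
From HB Require Import structures.
From mathcomp Require Export all_boot all_order all_algebra.
Set Implicit Arguments. Unset Strict Implicit. Unset Printing Implicit Defensive.
Export Order.TTheory GRing.Theory.

(* Main.v *)
Require Import Defs.
Local Open Scope ring_scope.

Lemma poset_ind (d : Order.disp_t) (A : finPOrderType d) (P : A -> Prop) :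
  (forall b, (forall c, (c < b)%O -> P c) -> P b) -> forall b, P b.
Proof.
move=> IH.
suff H : forall n b, (#|[pred c : A | (c < b)%O]| < n)%N -> P b.
  by move=> b; apply: (H _ b).
elim=> [|n IHn] b //= Hb; apply: IH => c cb; apply: IHn.
rewrite ltnS in Hb; apply: leq_trans Hb; apply: proper_card; apply/properP; split.
  by apply/subsetP=> x; rewrite !inE => xc; apply: lt_trans xc cb.
by exists c; rewrite !inE ?ltxx.
Qed.

Theorem mainTheorem7 (d : Order.disp_t) (A : finPOrderType d)
    (K : fieldType) (V : lmodType K)
    (pi s : A -> {linear V -> V})
    (Hproj : forall a v, pi a (pi a v) = pi a v)
    (Hs : forall a v, pi a v = \sum_(b | (b <= a)%O) s b v)
    (Hint : forall a b v,
        pi a (pi b v) = \sum_(c | ((c <= a)%O && (c <= b)%O)) s c v) :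
  forall a b v, s a (s b v) = (if a == b then s a v else 0).
Proof.
have sE : forall b v, s b v = pi b v - \sum_(c | (c < b)%O) s c v.
  move=> b v; rewrite Hs (bigD1 b) //=.
  rewrite (eq_bigl (fun c => (c < b)%O)) ?addrK // => c.
  by rewrite lt_neqAle andbC.
have S1 : forall b a v, pi a (s b v) = if (b <= a)%O then s b v else 0.
  elim/poset_ind => b IH a v.
  rewrite {1}sE raddfB raddf_sum /= Hint.
  under eq_bigr => c cb do rewrite IH //.
  apply/eqP; rewrite subr_eq; apply/eqP.
  case: ifP => ba.
    rewrite (eq_bigl (fun c => (c <= b)%O)); last first.
      move=> c; case: (boolP (c <= b)%O) => cb; last by rewrite andbF.
      by rewrite (le_trans cb ba).
    rewrite -Hs sE.
    rewrite [X in _ + X](eq_bigr (fun c => s c v)) ?subrK // => c cb.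
    by rewrite (le_trans (ltW cb) ba).
  rewrite add0r big_mkcond [RHS]big_mkcond /=; apply: eq_bigr => c _.
  rewrite [(c <= b)%O]le_eqVlt; case: eqP => [->|_] /=; first by rewrite ba ltxx.
  by rewrite andbC; case: (c < b)%O; case: (c <= a)%O.
have S2 : forall a b v, s a (s b v) = if a == b then s b v else 0.
  elim/poset_ind => a IH b v.
  rewrite {1}sE S1.
  under eq_bigr => c ca do rewrite IH //.
  rewrite big_mkcond /=.
  have -> : \sum_i (if (i < a)%O then (if i == b then s b v else 0) else 0)
      = \sum_(i | i == b) (if (b < a)%O then s b v else 0).
    rewrite [RHS]big_mkcond /=; apply: eq_bigr => c _.
    by case: eqP => [->|_]; case: ifP.
  rewrite big_pred1_eq (le_eqVlt b a).
  case: eqP => [->|ab]; first by rewrite eqxx ltxx subr0.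
  rewrite (negbTE (_ : a != b)); last by apply/eqP=> e; apply: ab; rewrite e.
  by case: ifP; rewrite ?subrr.
move=> a b v; rewrite S2; case: eqP => [->|] //.
Qed.
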